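(* Assume the standing hypotheses below. For each $n<\omega$ let $X_n$ be a fixed basis of $G_n$, let $\mathcal{B}_n$ be the family of all subgroups of $G_n$ generated by subsets of $X_n$, and let $\mathcal{B}'_n = \{ A \in \mathcal{B}_n : A + G_i \text{ is pure in } G \text{ for every } i<\omega\}$. Then the collection $$\mathcal{B} = \{ A \le G : A \cap G_n \in \mathcal{B}'_n \text{ for every } n < \omega \}$$ is a $G(\aleph_0)$-family of $G$ consisting of pure subgroups of $G$.
   Context: Standing hypotheses: $G$ is a torsion-free abelian group and $0 = G_0 < G_1 < \dots < G_n < \dots$ ($n<\omega$) is an ascending chain of subgroups of $G$ such that every $G_n$ is free, every $G_n$ is a pure subgroup of $G$, and $G = \bigcup_{n<\omega} G_n$. A subgroup $H$ of an abelian group $G$ is pure if solubility in $G$ of every equation $nx = h$ with $n\in\mathbb{Z}$, $h\in H$ implies its solubility in $H$. A $G(\aleph_0)$-family of an abelian group $M$ is a collection $\mathcal{C}$ of subgroups of $M$ such that: (i) $0 \in \mathcal{C}$ and $M \in \mathcal{C}$; (ii) $\mathcal{C}$ is closed under unions of ascending chains; (iii) for every $A_0 \in \mathcal{C}$ and every countable subset $H \subseteq M$ there exists $A \in \mathcal{C}$ with $A_0 \cup H \subseteq A$ and $A/A_0$ countable. *)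

(* Defs.v *)
From HB Require Import structures.
From mathcomp Require Import all_boot all_order all_algebra.
Set Implicit Arguments. Unset Strict Implicit. Unset Printing Implicit Defensive.
Import GRing.Theory.
Local Open Scope ring_scope.

Section Defs.
Variable G : zmodType.

Definition subgrp (H : G -> Prop) : Prop :=
  H 0 /\ forall x y, H x -> H y -> H (x - y).

Definition subset (A B : G -> Prop) : Prop := forall x, A x -> B x.

Definition torsion_free : Prop :=
  forall (x : G) (n : nat), x *+ n.+1 = 0 -> x = 0.

Definition pure (H : G -> Prop) : Prop :=
  forall (n : int) (h : G), H h -> (exists x : G, x *~ n = h) ->
    exists y, H y /\ y *~ n = h.

Definition gen (S : G -> Prop) (x : G) : Prop :=
  exists s : seq (int * G), (forall p, p \in s -> S p.2) /\
    x = \sum_(p <- s) p.2 *~ p.1.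

Definition independent (X : G -> Prop) : Prop :=
  forall (s : seq G) (c : nat -> int), uniq s -> (forall x, x \in s -> X x) ->
    \sum_(i < size s) s`_i *~ c i = 0 -> forall i, (i < size s)%N -> c i = 0.

Definition is_basis (H X : G -> Prop) : Prop :=
  subset X H /\ independent X /\ (forall x, H x <-> gen X x).

Definition free (H : G -> Prop) : Prop := subgrp H /\ exists X, is_basis H X.

Definition setI (A B : G -> Prop) : G -> Prop := fun x => A x /\ B x.
Definition setD (A B : G -> Prop) : G -> Prop :=
  fun x => exists a b, A a /\ B b /\ x = a + b.

Definition countable_set (S : G -> Prop) : Prop :=
  exists f : G -> nat, forall x y, S x -> S y -> f x = f y -> x = y.

(* A0 <= A and A/A0 is countable: an injection of the cosets into nat *)
Definition countable_quot (A A0 : G -> Prop) : Prop :=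
  exists f : G -> nat, forall x y, A x -> A y -> f x = f y -> A0 (x - y).

(* G(aleph_0)-family of the whole group G (M = G) *)
Definition G_aleph0_family (C : (G -> Prop) -> Prop) : Prop :=
  [/\ C (fun x => x = 0), C (fun _ => True),
      (forall (I : Type) (F : I -> G -> Prop), inhabited I ->
         (forall i, C (F i)) ->
         (forall i j, subset (F i) (F j) \/ subset (F j) (F i)) ->
         C (fun x => exists i, F i x))
    & (forall (A0 H : G -> Prop), C A0 -> countable_set H ->
         exists A, [/\ C A, subset A0 A, subset H A & countable_quot A A0])].

Definition good_chain (Gn : nat -> G -> Prop) : Prop :=
  [/\ torsion_free,
      (forall x, Gn 0%N x <-> x = 0),
      (forall n, subset (Gn n) (Gn n.+1) /\ exists x, Gn n.+1 x /\ ~ Gn n x),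
      (forall n, free (Gn n) /\ pure (Gn n))
    & (forall x, exists n, Gn n x)].

Definition calB (Gn : nat -> G -> Prop) (X : nat -> G -> Prop) (n : nat)
  (A : G -> Prop) : Prop :=
  exists S, subset S (X n) /\ forall x, A x <-> gen S x.

Definition calB' (Gn : nat -> G -> Prop) (X : nat -> G -> Prop) (n : nat)
  (A : G -> Prop) : Prop :=
  calB Gn X n A /\ forall i, pure (setD A (Gn i)).

Definition calBfam (Gn : nat -> G -> Prop) (X : nat -> G -> Prop)
  (A : G -> Prop) : Prop :=
  subgrp A /\ forall n, calB' Gn X n (setI A (Gn n)).

End Defs.

(* Main.v *)
Require Import Defs.
From HB Require Import structures.
From mathcomp Require Import all_boot all_order all_algebra.
From Stdlib Require Import ClassicalEpsilon.
Set Implicit Arguments. Unset Strict Implicit. Unset Printing Implicit Defensive.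
Import GRing.Theory.
Local Open Scope ring_scope.

Lemma sg0 (G : zmodType) (K : G -> Prop) : subgrp K -> K 0.
Proof. by case. Qed.
Lemma sgN (G : zmodType) (K : G -> Prop) x : subgrp K -> K x -> K (- x).
Proof. by move=> [K0 KB] Kx; rewrite -sub0r; apply: KB. Qed.
Lemma sgD (G : zmodType) (K : G -> Prop) x y : subgrp K -> K x -> K y -> K (x + y).
Proof. move=> hK Kx Ky; rewrite -[y]opprK; apply: hK.2 => //; exact: sgN. Qed.
Lemma sgB (G : zmodType) (K : G -> Prop) x y : subgrp K -> K x -> K y -> K (x - y).
Proof. by move=> hK; apply: hK.2. Qed.
Lemma sgMn (G : zmodType) (K : G -> Prop) x (n : nat) : subgrp K -> K x -> K (x *+ n).
Proof.
move=> hK Kx; elim: n => [|n IH]; first by rewrite mulr0n; exact: sg0.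
by rewrite mulrS; apply: sgD.
Qed.
Lemma sgMz (G : zmodType) (K : G -> Prop) x (z : int) : subgrp K -> K x -> K (x *~ z).
Proof.
move=> hK Kx; case: z => n; first by rewrite /intmul; exact: sgMn.
rewrite /intmul; apply: sgN => //; exact: sgMn.
Qed.
Lemma sgsum (G : zmodType) (K : G -> Prop) (s : seq (int * G)) : subgrp K ->
  (forall p, p \in s -> K p.2) -> K (\sum_(p <- s) p.2 *~ p.1).
Proof.
move=> hK; elim: s => [|p s IH] hs; first by rewrite big_nil; exact: sg0.
rewrite big_cons; apply: sgD => //; last by apply: IH => q qs; apply: hs; rewrite inE qs orbT.
by apply: sgMz => //; apply: hs; rewrite inE eqxx.
Qed.

Lemma gen_sub (G : zmodType) (S K : G -> Prop) x : subgrp K -> (forall z, S z -> K z) -> gen S x -> K x.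
Proof. move=> hK hS [s [hs ->]]; apply: sgsum => // p /hs; exact: hS. Qed.

Lemma gen_in (G : zmodType) (S : G -> Prop) z : S z -> gen S z.
Proof.
move=> Sz; exists [:: (1%R, z)]; split; first by move=> p; rewrite inE => /eqP ->.
by rewrite big_cons big_nil addr0.
Qed.

Lemma gen_subgrp (G : zmodType) (S : G -> Prop) : subgrp (gen S).
Proof.
split; first by exists [::]; split => //; rewrite big_nil.
move=> x y [s [hs ->]] [t [ht ->]].
exists (s ++ map (fun p => (- p.1, p.2)) t); split.
  move=> p; rewrite mem_cat => /orP [/hs //|/mapP [q /ht qt ->]] //.
rewrite big_cat /= big_map; congr (_ + _).
rewrite -sumrN; apply: eq_bigr => p _ /=; by rewrite mulrNz.
Qed.

Lemma gen_mono (G : zmodType) (S T : G -> Prop) x : (forall z, S z -> T z) -> gen S x -> gen T x.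
Proof. move=> hST; apply: gen_sub; first exact: gen_subgrp. move=> z /hST; exact: gen_in. Qed.

Definition code := (nat + (seq (int * nat) * nat * nat))%type.

Fixpoint stage (G : zmodType) (e0 : nat -> G) (w : G -> nat -> seq G) (k : nat) : nat -> G :=
  match k with
  | 0%N => e0
  | k'.+1 => fun c => match (unpickle c : option code) with
     | Some (inl j) => stage e0 w k' j
     | Some (inr (t, kk, idx)) => nth 0 (w (\sum_(p <- t) stage e0 w k' p.2 *~ p.1) kk) idx
     | None => 0 end
  end.

Definition efin (G : zmodType) (e0 : nat -> G) (w : G -> nat -> seq G) (c : nat) : G :=
  match (unpickle c : option (nat * nat)) with
  | Some (k, j) => stage e0 w k j | None => 0 end.

Definition emb (j : nat) : nat := pickle (inl j : code).

Lemma stage_emb (G : zmodType) (e0 : nat -> G) w k j :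
  stage e0 w k.+1 (emb j) = stage e0 w k j.
Proof. by rewrite /= /emb pickleK. Qed.

Lemma stage_le (G : zmodType) (e0 : nat -> G) w k d j :
  stage e0 w (k + d) (iter d emb j) = stage e0 w k j.
Proof. elim: d => [|d IH]; first by rewrite addn0. by rewrite addnS iterS stage_emb. Qed.

Lemma efin_ge (G : zmodType) (e0 : nat -> G) w c :
  exists k, forall K, (k <= K)%N -> exists j, stage e0 w K j = efin e0 w c.
Proof.
rewrite /efin; case: (unpickle c) => [[k j]|].
  exists k => K kK; exists (iter (K - k) emb j); by rewrite -{1}(subnKC kK) stage_le.
exists 1%N => [[|K]] // _.
exists (pickle (inr ([::], 0%N, size (w 0 0%N)) : code)).
by rewrite /= pickleK big_nil nth_default.
Qed.

Lemma efin_seq (G : zmodType) (e0 : nat -> G) w (t : seq (int * nat)) :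
  exists k, forall K, (k <= K)%N -> exists t' : seq (int * nat),
    \sum_(p <- t) efin e0 w p.2 *~ p.1 = \sum_(p <- t') stage e0 w K p.2 *~ p.1.
Proof.
elim: t => [|p t [k2 IH]]; first by exists 0%N => K _; exists [::]; rewrite !big_nil.
have [k1 H1] := efin_ge e0 w p.2.
exists (maxn k1 k2) => K; rewrite geq_max => /andP [h1 h2].
have [j hj] := H1 _ h1; have [t' ht'] := IH _ h2.
exists ((p.1, j) :: t'); by rewrite !big_cons /= hj ht'.
Qed.

Lemma closure (G : zmodType) (H : G -> Prop) (w : G -> nat -> seq G) :
  countable_set H -> exists e : nat -> G,
   (forall h, H h -> exists c, e c = h) /\
   (forall (t : seq (int * nat)) kk z, z \in w (\sum_(p <- t) e p.2 *~ p.1) kk ->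
       exists c, e c = z).
Proof.
move=> [f hf].
pose e0 := fun j => epsilon (inhabits (0 : G)) (fun h => H h /\ f h = j).
exists (efin e0 w); split.
  move=> h Hh; exists (pickle (0%N, f h)); rewrite /efin pickleK /= /e0.
  have [H1 H2] := epsilon_spec (inhabits (0 : G)) (fun h' => H h' /\ f h' = f h) (ex_intro _ h (conj Hh erefl)).
  exact: hf.
move=> t kk z hz.
have [k hk] := efin_seq e0 w t; have [t' ht'] := hk k (leqnn k).
rewrite ht' in hz.
exists (pickle (k.+1, pickle (inr (t', kk, index z (w (\sum_(p <- t') stage e0 w k p.2 *~ p.1) kk)) : code))).
by rewrite /efin pickleK /= pickleK nth_index.
Qed.

Lemma pure_ext (G : zmodType) (A B : G -> Prop) : (forall x, A x <-> B x) -> pure A -> pure B.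
Proof.
move=> hAB pA n h /hAB Ah hx; have [y [Ay hy]] := pA n h Ah hx.
by exists y; split => //; apply/hAB.
Qed.

Lemma chain_mono (G : zmodType) (Gn : nat -> G -> Prop) m k x :
  good_chain Gn -> (m <= k)%N -> Gn m x -> Gn k x.
Proof.
move=> [_ _ hs _ _] mk; rewrite -(subnKC mk); elim: (k - m)%N => [|d IH]; first by rewrite addn0.
by move=> /IH; rewrite addnS; apply: (hs _).1.
Qed.

Lemma chain_sg (G : zmodType) (Gn : nat -> G -> Prop) n : good_chain Gn -> subgrp (Gn n).
Proof. by move=> [_ _ _ hf _]; case: (hf n) => [[]]. Qed.

Lemma chain_pure (G : zmodType) (Gn : nat -> G -> Prop) n : good_chain Gn -> pure (Gn n).
Proof. by move=> [_ _ _ hf _]; case: (hf n). Qed.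

Lemma calB_pure (G : zmodType) (Gn : nat -> G -> Prop) X A :
  good_chain Gn -> calBfam Gn X A -> pure A.
Proof.
move=> hc [sA hA] n h Ah hx.
have [_ h0 _ _ hu] := hc.
have [k hk] := hu h.
have [_ /(_ 0%N) pk] := hA k.
have hD : Defs.setD (Defs.setI A (Gn k)) (Gn 0%N) h by exists h, 0; rewrite addr0; split => //; split => //; apply/h0.
have [y [[a [b [[Aa _] [/h0 -> ->]]]] hy]] := pk n h hD hx.
by exists (a + 0); split => //; rewrite addr0.
Qed.

Lemma gen_false (G : zmodType) x : gen (fun _ : G => False) x <-> x = 0.
Proof.
split.
  by move=> [[|p s] [hs ->]]; [rewrite big_nil | case: (hs p); rewrite inE eqxx].
by move=> ->; exists [::]; split => //; rewrite big_nil.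
Qed.

Lemma fam_zero (G : zmodType) (Gn : nat -> G -> Prop) X :
  good_chain Gn -> calBfam Gn X (fun x => x = 0).
Proof.
move=> hc; split; first by split => // x y -> ->; rewrite subr0.
move=> n; split.
  exists (fun _ => False); split => // x; rewrite gen_false; split; first by case.
  by move=> ->; split => //; exact: sg0 (chain_sg n hc).
move=> i; apply: (pure_ext (A := Gn i)); last exact: chain_pure.
move=> x; split; first by move=> Gx; exists 0, x; rewrite add0r; split => //; split => //; exact: sg0 (chain_sg n hc).
by move=> [a [b [[-> _] [Gb ->]]]]; rewrite add0r.
Qed.

Lemma fam_top (G : zmodType) (Gn : nat -> G -> Prop) X :
  good_chain Gn -> (forall n, is_basis (Gn n) (X n)) -> calBfam Gn X (fun _ => True).
Proof.
move=> hc hb; split; first by [].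
move=> n; split.
  exists (X n); split; first by move=> z.
  move=> x; rewrite -(hb n).2.2; split; [by case | by []].
move=> i; apply: (pure_ext (A := Gn (maxn n i))); last exact: chain_pure.
move=> x; split.
  case: (leqP n i) => hni.
    move=> Gx; exists 0, x; rewrite add0r; split; first by split => //; exact: sg0 (chain_sg n hc).
    by split => //; move: Gx; rewrite (maxn_idPr hni).
  move=> Gx; exists x, 0; rewrite addr0; split; last by split => //; exact: sg0 (chain_sg i hc).
  by split => //; move: Gx; rewrite (maxn_idPl (ltnW hni)).
move=> [a [b [[_ Ga] [Gb ->]]]]; apply: sgD; first exact: chain_sg.
  by apply: chain_mono Ga => //; rewrite leq_maxl.
by apply: chain_mono Gb => //; rewrite leq_maxr.
Qed.

Lemma directed (G : zmodType) (I : Type) (F : I -> G -> Prop) (s : seq (int * G)) :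
  inhabited I -> (forall i j, Defs.subset (F i) (F j) \/ Defs.subset (F j) (F i)) ->
  (forall p, p \in s -> exists i, F i p.2) -> exists i, forall p, p \in s -> F i p.2.
Proof.
move=> [i0] hcmp; elim: s => [|q s IH] hs; first by exists i0.
have [i Fi] := hs q (mem_head _ _).
have [j Fj] := IH (fun p ps => hs p (mem_behead (s := q :: s) ps)).
case: (hcmp i j) => hij.
  exists j => p; rewrite inE => /orP [/eqP ->|/Fj //]; exact: hij.
exists i => p; rewrite inE => /orP [/eqP -> //|/Fj]; exact: hij.
Qed.

Lemma fam_union (G : zmodType) (Gn : nat -> G -> Prop) X (I : Type) (F : I -> G -> Prop) :
  good_chain Gn -> (forall n, is_basis (Gn n) (X n)) -> inhabited I ->
  (forall i, calBfam Gn X (F i)) ->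
  (forall i j, Defs.subset (F i) (F j) \/ Defs.subset (F j) (F i)) ->
  calBfam Gn X (fun x => exists i, F i x).
Proof.
move=> hc hb hI hF hcmp.
have sgU : subgrp (fun x => exists i, F i x).
  split; first by case: hI => i0; exists i0; exact: sg0 (hF i0).1.
  move=> x y [i Fx] [j Fy]; case: (hcmp i j) => hij.
    by exists j; apply: sgB (hF j).1 _ Fy; exact: hij.
  by exists i; apply: sgB (hF i).1 Fx _; exact: hij.
split => // n; split.
  exists (fun z => X n z /\ exists i, F i z); split; first by move=> z [].
  move=> x; split.
    move=> [[i Fx] Gx].
    have [[Si [Sisub hSi]] _] := (hF i).2 n.
    have : gen Si x by apply/hSi.
    apply: gen_mono => z Siz; split; first exact: Sisub.
    by exists i; have /hSi [] := gen_in Siz.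
  move=> hg; split; last first.
    by apply: gen_sub hg; [exact: chain_sg | move=> z [/((hb n).1 z)]].
  move: hg => [s [hs ->]].
  have [i hi] := directed hI hcmp (fun p ps => (hs p ps).2).
  by exists i; apply: sgsum => //; exact: (hF i).1.
move=> i m h [a [b [[[j Fa] Ga] [Gb ->]]]] hx.
have [_ pj] := (hF j).2 n.
have [y [[a' [b' [[Fa' Ga'] [Gb' ->]]]] hy]] := pj i m (a + b)
   (ex_intro _ a (ex_intro _ b (conj (conj Fa Ga) (conj Gb erefl)))) hx.
exists (a' + b'); split => //; exists a', b'; split => //; split => //; by exists j.
Qed.

Lemma sgI (G : zmodType) (A B : G -> Prop) : subgrp A -> subgrp B -> subgrp (Defs.setI A B).
Proof.
move=> hA hB; split; first by split; [exact: sg0 hA | exact: sg0 hB].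
by move=> x y [Ax Bx] [Ay By]; split; [exact: sgB | exact: sgB].
Qed.

Lemma sgsetD (G : zmodType) (A B : G -> Prop) : subgrp A -> subgrp B -> subgrp (Defs.setD A B).
Proof.
move=> hA hB; split; first by exists 0, 0; rewrite addr0; split; [exact: sg0 | split; [exact: sg0|]].
move=> x y [a [b [Aa [Bb ->]]]] [a' [b' [Aa' [Bb' ->]]]].
exists (a - a'), (b - b'); split; first exact: sgB.
split; first exact: sgB.
by rewrite opprD addrACA.
Qed.

Lemma gen_sumt (G : zmodType) (e : nat -> G) g :
  gen (fun z => exists c, e c = z) g -> exists t : seq (int * nat), g = \sum_(p <- t) e p.2 *~ p.1.
Proof.
move=> [s [hs ->]]; elim: s hs => [|q s IH] hs; first by exists [::]; rewrite !big_nil.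
have [c hc] := hs q (mem_head _ _).
have [t ht] := IH (fun p ps => hs p (mem_behead (s := q :: s) ps)).
by exists ((q.1, c) :: t); rewrite !big_cons /= hc ht.
Qed.

Lemma sumt_gen (G : zmodType) (e : nat -> G) (t : seq (int * nat)) :
  gen (fun z => exists c, e c = z) (\sum_(p <- t) e p.2 *~ p.1).
Proof.
exists (map (fun p => (p.1, e p.2)) t); split; first by move=> p /mapP [q _ ->]; exists q.2.
by rewrite big_map.
Qed.

Definition rep (G : zmodType) (X : nat -> G -> Prop) (n : nat) (x : G) : seq (int * G) :=
  epsilon (inhabits [::]) (fun s : seq (int * G) =>
     (forall p, p \in s -> X n p.2) /\ x = \sum_(p <- s) p.2 *~ p.1).

Lemma rep_gen (G : zmodType) (Gn : nat -> G -> Prop) X n x (Y : G -> Prop) :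
  is_basis (Gn n) (X n) -> Gn n x -> (forall z, z \in map snd (rep X n x) -> Y z) ->
  gen (fun z => X n z /\ Y z) x.
Proof.
move=> [_ [_ hb]] /hb [s hs] hY.
have [h1 h2] := epsilon_spec (inhabits [::]) (fun s : seq (int * G) =>
     (forall p, p \in s -> X n p.2) /\ x = \sum_(p <- s) p.2 *~ p.1) (ex_intro _ s hs).
exists (rep X n x); split => // p hp; split; first exact: h1.
by apply: hY; apply/mapP; exists p.
Qed.

Definition d1 (G : zmodType) (Gn : nat -> G -> Prop) (A0 : G -> Prop) n (y : G) : G * G :=
  epsilon (inhabits (0, 0)) (fun q : G * G => Gn n q.1 /\ A0 q.2 /\ y = q.1 + q.2).

Definition d2 (G : zmodType) (Gn : nat -> G -> Prop) (A0 : G -> Prop) n i (m : int) (y : G) : G :=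
  epsilon (inhabits 0) (fun x => Gn n x /\ Defs.setD (Defs.setI A0 (Gn n)) (Gn i) (x *~ m - y)).

Definition wf (G : zmodType) (Gn : nat -> G -> Prop) X (A0 : G -> Prop) (y : G) (kk : nat) : seq G :=
  match (unpickle kk : option (nat * nat * int * bool)) with
  | Some (n, i, m, true) => map snd (rep X n (d1 Gn A0 n y).1)
  | Some (n, i, m, false) => map snd (rep X n (d2 Gn A0 n i m y))
  | None => [::] end.

Lemma D1 (G : zmodType) (Gn : nat -> G -> Prop) X A0 (e : nat -> G) n y g a0 :
  (forall n, is_basis (Gn n) (X n)) ->
  (forall (t : seq (int * nat)) kk z, z \in wf Gn X A0 (\sum_(p <- t) e p.2 *~ p.1) kk ->
       exists c, e c = z) ->
  gen (fun z => exists c, e c = z) y -> Gn n g -> A0 a0 -> y = g + a0 ->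
  exists g' a', [/\ Gn n g', A0 a', y = g' + a' & gen (fun z => X n z /\ exists c, e c = z) g'].
Proof.
move=> hb hcl /gen_sumt [t ->] Gg Aa ey.
have [h1 [h2 h3]] := epsilon_spec (inhabits (0, 0)) (fun q : G * G => Gn n q.1 /\ A0 q.2 /\
   \sum_(p <- t) e p.2 *~ p.1 = q.1 + q.2) (ex_intro _ (g, a0) (conj Gg (conj Aa ey))).
exists (d1 Gn A0 n (\sum_(p <- t) e p.2 *~ p.1)).1, (d1 Gn A0 n (\sum_(p <- t) e p.2 *~ p.1)).2.
split => //; apply: rep_gen => // z hz.
apply: (hcl t (pickle (n, 0%N, 0 : int, true))); by rewrite /wf pickleK.
Qed.

Lemma D2 (G : zmodType) (Gn : nat -> G -> Prop) X A0 (e : nat -> G) n i m y x0 :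
  (forall n, is_basis (Gn n) (X n)) ->
  (forall (t : seq (int * nat)) kk z, z \in wf Gn X A0 (\sum_(p <- t) e p.2 *~ p.1) kk ->
       exists c, e c = z) ->
  gen (fun z => exists c, e c = z) y -> Gn n x0 ->
  Defs.setD (Defs.setI A0 (Gn n)) (Gn i) (x0 *~ m - y) ->
  exists x, [/\ Gn n x, Defs.setD (Defs.setI A0 (Gn n)) (Gn i) (x *~ m - y)
     & gen (fun z => X n z /\ exists c, e c = z) x].
Proof.
move=> hb hcl /gen_sumt [t ->] Gx hQ.
have [h1 h2] := epsilon_spec (inhabits 0) (fun x => Gn n x /\ Defs.setD (Defs.setI A0 (Gn n)) (Gn i)
   (x *~ m - \sum_(p <- t) e p.2 *~ p.1)) (ex_intro _ x0 (conj Gx hQ)).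
exists (d2 Gn A0 n i m (\sum_(p <- t) e p.2 *~ p.1)).
split => //; apply: rep_gen => // z hz.
apply: (hcl t (pickle (n, i, m, false))); by rewrite /wf pickleK.
Qed.

Lemma fam_ext (G : zmodType) (Gn : nat -> G -> Prop) X (A0 H : G -> Prop) :
  good_chain Gn -> (forall n, is_basis (Gn n) (X n)) ->
  calBfam Gn X A0 -> countable_set H ->
  exists A, [/\ calBfam Gn X A, Defs.subset A0 A, Defs.subset H A & countable_quot A A0].
Proof.
move=> hc hb [sA0 hA0] hH.
have [e [eH hcl]] := closure (wf Gn X A0) hH.
pose Y := fun z => exists c, e c = z.
pose A := fun x => exists a0 g, [/\ A0 a0, gen Y g & x = a0 + g].
have sgA : subgrp A.
  split; first by exists 0, 0; rewrite addr0; split => //; [exact: sg0 | exact: sg0 (gen_subgrp Y)].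
  move=> x y [a0 [g [Aa Gg ->]]] [b0 [h [Ab Gh ->]]].
  exists (a0 - b0), (g - h); split; [exact: sgB | exact: sgB (gen_subgrp Y) _ _ | ].
  by rewrite opprD addrACA.
have A0A : forall x, A0 x -> A x.
  by move=> x Ax; exists x, 0; rewrite addr0; split => //; exact: sg0 (gen_subgrp Y).
have genYA : forall x, gen Y x -> A x.
  by move=> x Gx; exists 0, x; rewrite add0r; split => //; exact: sg0 sA0.
have decomp : forall n a, Defs.setI A (Gn n) a -> exists b g,
    [/\ Defs.setI A0 (Gn n) b, gen (fun z => X n z /\ Y z) g & a = b + g].
  move=> n a [[a0 [y [Aa Gy ->]]] Ga].
  have eyy : y = (a0 + y) + - a0 by rewrite addrC addKr.
  have [g' [a' [Gg' Aa' ey hg']]] := D1 hb hcl Gy Ga (sgN sA0 Aa) eyy.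
  exists (a0 + a'), g'; split => //; last by rewrite ey addrA addrAC.
  split; first exact: sgD.
  have -> : a0 + a' = (a0 + y) - g' by rewrite ey addrCA addrAC subrr add0r.
  apply: sgB (chain_sg n hc) Ga Gg'.
have genXG : forall n g, gen (fun z => X n z /\ Y z) g -> Gn n g.
  move=> n g; apply: gen_sub; first exact: chain_sg.
  by move=> z [/((hb n).1 z)].
have genXA : forall n g, gen (fun z => X n z /\ Y z) g -> A g.
  move=> n g hg; apply: genYA; apply: gen_mono hg; by move=> z [].
exists A; split => //; last first.
- pose Pt := fun x (t : seq (int * nat)) => exists a0, A0 a0 /\ x = a0 + \sum_(p <- t) e p.2 *~ p.1.
  pose ch := fun x => epsilon (inhabits [::]) (Pt x).
  have spec : forall x, A x -> Pt x (ch x).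
    move=> z [a0 [g [Aa /gen_sumt [t ht] ->]]]; apply: epsilon_spec; exists t, a0; by rewrite ht.
  exists (fun x => pickle (ch x)).
  move=> x y Ax Ay /(pcan_inj pickleK) eq.
  have [a1 [Aa1 ex]] := spec x Ax; have [b1 [Ab1 ey]] := spec y Ay.
  rewrite eq in ex.
  have -> : x - y = a1 - b1.
    move: (ch y) ex ey => c -> ->; by rewrite opprD addrACA subrr addr0.
  exact: sgB.
- by move=> h Hh; apply: genYA; apply: gen_in; exact: eH.
split => // n; split.
  have [[S0 [S0X hS0]] _] := hA0 n.
  exists (fun z => S0 z \/ (X n z /\ Y z)); split; first by move=> z [/S0X|[]].
  move=> x; split.
    move=> /decomp [b [g [/hS0 hbS hg ->]]].
    apply: sgD; first exact: gen_subgrp.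
      by apply: gen_mono hbS => z; left.
    by apply: gen_mono hg => z; right.
  apply: gen_sub; first exact: sgI (chain_sg n hc).
  move=> z [/gen_in /hS0 [Az Gz]|[Xz Yz]]; first by split => //; exact: A0A.
  split; first by apply: genYA; exact: gen_in.
  exact: (hb n).1.
move=> i m p [a [g0 [Aa [Gg0 ->]]]] hx.
case: (leqP n i) => hni.
  have Gp : Gn i (a + g0) by apply: sgD (chain_sg i hc) _ Gg0; exact: chain_mono hni Aa.2.
  have [y' [Gy' hy']] := chain_pure (n := i) hc Gp hx.
  exists y'; split => //; exists 0, y'; rewrite add0r; split => //.
  exact: sg0 (sgI sgA (chain_sg n hc)).
have Gp : Gn n (a + g0) by apply: sgD (chain_sg n hc) Aa.2 _; exact: chain_mono (ltnW hni) Gg0.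
have [x'' [Gx'' hx'']] := chain_pure (n := n) hc Gp hx.
have [b [g [[Ab Gb] hg ea]]] := decomp n a Aa.
have hQ : Defs.setD (Defs.setI A0 (Gn n)) (Gn i) (x'' *~ m - g).
  by exists b, g0; split => //; rewrite hx'' ea addrAC addrK.
have gY : gen Y g by apply: gen_mono hg => z [].
have [x [Gx Qx hgx]] := D2 hb hcl gY Gx'' hQ.
have sQ : subgrp (Defs.setD (Defs.setI A0 (Gn n)) (Gn i)).
  apply: sgsetD; [exact: sgI (chain_sg n hc) | exact: chain_sg].
have Qd : Defs.setD (Defs.setI A0 (Gn n)) (Gn i) ((x'' - x) *~ m).
  have := sgB sQ hQ Qx; by rewrite opprD opprK addrACA addNr addr0 -mulrzBl.
have [_ pQ] := hA0 n.
have [w' [[a' [b' [[Aa' Ga'] [Gb' ew]]]] hw]] := pQ i m _ Qd (ex_intro _ (x'' - x) erefl).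
exists (x + w'); split; last by rewrite mulrzDl hw -mulrzDl addrC subrK.
exists (x + a'), b'; rewrite ew addrA; split => //.
split; first by apply: sgD sgA (genXA _ _ hgx) (A0A _ Aa').
apply: sgD (chain_sg n hc) Gx Ga'.
Qed.

Theorem lemma3 (G : zmodType) (Gn : nat -> G -> Prop) (X : nat -> G -> Prop) :
  good_chain Gn ->
  (forall n, is_basis (Gn n) (X n)) ->
  G_aleph0_family (calBfam Gn X) /\
  (forall A, calBfam Gn X A -> subgrp A /\ pure A).
Proof.
move=> hc hb; split; last by move=> A hA; split; [exact: hA.1 | exact: calB_pure hA].
split.
- exact: fam_zero.
- exact: fam_top.
- move=> I F hI hF hcmp; exact: fam_union.
- move=> A0 H hA0 hH; exact: fam_ext.
Qed.
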